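(* If $\kappa$ is a singular strong limit cardinal, then there is no logic $\mathscr L$ such that $\mathbb L^{-1}_\kappa\le\mathscr L\le\mathbb L^0_\kappa$ and $\mathscr L$ satisfies full substitution.
   Context: A logic $\mathscr L$ assigns to each vocabulary $\tau$ a set $\mathscr L(\tau)$ of sentences and a satisfaction relation, invariant under isomorphism and renaming, with $\mathscr L(\tau_1)\subseteq\mathscr L(\tau_2)$ for $\tau_1\subseteq\tau_2$ and satisfaction depending only on the reduct; a formula $\varphi(\bar x)$ is a sentence in the vocabulary expanded by new constants. $\mathscr L_1\le\mathscr L_2$ means every sentence of $\mathscr L_1(\tau)$ is equivalent (same models) to one of $\mathscr L_2(\tau)$, for every $\tau$. $\mathbb L_{\lambda,\mu}$ is the infinitary logic with conjunctions of fewer than $\lambda$ formulas and quantification over fewer than $\mu$ variables; $\mathbb L^{-1}_\kappa=\bigcup_{\lambda<\kappa}\mathbb L_{\lambda^+,\aleph_0}$ and $\mathbb L^0_\kappa=\bigcup_{\lambda<\kappa}\mathbb L_{\lambda^+,\lambda^+}$. Full substitution: for vocabularies $\tau_1,\tau_2$ and an assignment to each atomic $\tau_2$-formula $\varphi(\bar x)$ (of the forms $P(\bar x)$, $x_0=x_1$, $x_0=F(x_1,\dots,x_n)$) of a formula $\vartheta_\varphi(\bar x)\in\mathscr L(\tau_1)$ with $\vartheta_{x_0=x_1}$ being $x_0=x_1$, and a $\tau_1$-model $M$, let $M[\bar\vartheta]$ be the $\tau_2$-structure with the universe of $M$ interpreting $P$ by $\{\bar a:M\models\vartheta_{P(\bar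 x)}[\bar a]\}$ and $F$ by the function whose graph is defined by $\vartheta_{x_0=F(\bar x)}$ (when this is a function). $\mathscr L$ has full substitution if for every such assignment and every $\psi_2\in\mathscr L(\tau_2)$ there is $\psi_1\in\mathscr L(\tau_1)$ with $M\models\psi_1\iff M[\bar\vartheta]\models\psi_2$ for every $\tau_1$-model $M$ for which $M[\bar\vartheta]$ is defined. *)

(* Defs.v *)
From mathcomp Require Import all_boot.
Set Implicit Arguments. Unset Strict Implicit. Unset Printing Implicit Defensive.

Definition le_card (A B : Type) : Prop := exists f : A -> B, injective f.
Definition lt_card (A B : Type) : Prop := le_card A B /\ ~ le_card B A.
Definition sub_of (K : Type) (S : K -> Prop) : Type := {k : K | S k}.

(* The cardinal kappa is represented by a type K (kappa = |K|). *)
(* kappa singular: kappa infinite and kappa is the union of fewer than kappa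
   sets each of size less than kappa (i.e. cf(kappa) < kappa). *)
Definition singular_card (K : Type) : Prop :=
  le_card nat K /\
  exists (I : Type) (A : I -> K -> Prop),
    lt_card I K /\ (forall i, lt_card (sub_of (A i)) K) /\
    (forall k, exists i, A i k).

Definition strong_limit (K : Type) : Prop :=
  le_card nat K /\ forall L : Type, lt_card L K -> lt_card (L -> Prop) K.

Record vocab := Vocab {
  rel_sym : Type; rar : rel_sym -> nat;
  fun_sym : Type; far : fun_sym -> nat }.

Record structure (t : vocab) := Structure {
  carrier : Type;
  nonempty : inhabited carrier;
  relI : forall r : rel_sym t, ('I_(rar r) -> carrier) -> Prop;
  funI : forall f : fun_sym t, ('I_(far f) -> carrier) -> carrier }.
Arguments carrier {t}.
Arguments relI {t}.
Arguments funI {t}.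

Definition iso (t : vocab) (M N : structure t) : Prop :=
  exists h : carrier M -> carrier N, bijective h /\
    (forall r v, relI M r v <-> relI N r (fun i => h (v i))) /\
    (forall f v, h (funI M f v) = funI N f (fun i => h (v i))).

Record vmor (t1 t2 : vocab) := VMor {
  mr : rel_sym t1 -> rel_sym t2;
  mr_ar : forall r, rar (mr r) = rar r;
  mr_inj : injective mr;
  mf : fun_sym t1 -> fun_sym t2;
  mf_ar : forall f, far (mf f) = far f;
  mf_inj : injective mf }.

Definition reduct (t1 t2 : vocab) (m : vmor t1 t2) (M : structure t2)
  : structure t1 :=
  @Structure t1 (carrier M) (nonempty M)
    (fun r v => relI M (mr m r) (fun i => v (cast_ord (mr_ar m r) i)))
    (fun f v => funI M (mf m f) (fun i => v (cast_ord (mf_ar m f) i))).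

Record Logic := MkLogic {
  Sent : vocab -> Type;
  sat : forall t : vocab, structure t -> Sent t -> Prop;
  sat_iso : forall t (M N : structure t), iso M N ->
      forall phi, sat M phi <-> sat N phi;
  (* L(t1) included in L(t2) for t1 "subset" t2 (also renaming), and
     satisfaction depends only on the reduct *)
  transl : forall t1 t2 : vocab, vmor t1 t2 -> Sent t1 -> Sent t2;
  sat_transl : forall t1 t2 (m : vmor t1 t2) (M : structure t2) phi,
      sat M (transl m phi) <-> sat (reduct m M) phi }.
Arguments sat {l t}.

Definition addc (t : vocab) (n : nat) : vocab :=
  @Vocab (rel_sym t) (@rar t) (fun_sym t + 'I_n)%type
    (fun f => match f with inl g => far g | inr _ => 0 end).

Definition expand (t : vocab) (M : structure t) (n : nat)
  (a : 'I_n -> carrier M) : structure (addc t n) :=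
  @Structure (addc t n) (carrier M) (nonempty M) (relI M)
    (fun f => match f as f0 return ('I_(@far (addc t n) f0) -> carrier M) -> carrier M
              with inl g => funI M g | inr i => fun _ => a i end).

Arguments expand {t} M {n} a.

Definition consf (C : Type) (n : nat) (x : C) (v : 'I_n -> C) : 'I_n.+1 -> C :=
  fun i => match unlift ord0 i with Some j => v j | None => x end.

Definition subst_struct (L : Logic) (t1 t2 : vocab)
  (thR : forall r : rel_sym t2, Sent L (addc t1 (rar r)))
  (M : structure t1)
  (F : forall f : fun_sym t2, ('I_(far f) -> carrier M) -> carrier M)
  : structure t2 :=
  @Structure t2 (carrier M) (nonempty M)
    (fun r v => sat (expand M v) (thR r)) F.

(* F is the function whose graph is defined by theta_{x0 = F(x1..xn)} *)
Definition graph_ok (L : Logic) (t1 t2 : vocab)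
  (thF : forall f : fun_sym t2, Sent L (addc t1 (far f).+1))
  (M : structure t1)
  (F : forall f : fun_sym t2, ('I_(far f) -> carrier M) -> carrier M) : Prop :=
  forall f v x, x = F f v <-> sat (expand M (consf x v)) (thF f).

Arguments graph_ok {L t1 t2} thF M F.
Arguments subst_struct {L t1 t2} thR M F.

Definition full_substitution (L : Logic) : Prop :=
  forall (t1 t2 : vocab)
    (thR : forall r : rel_sym t2, Sent L (addc t1 (rar r)))
    (thF : forall f : fun_sym t2, Sent L (addc t1 (far f).+1))
    (psi2 : Sent L t2),
  exists psi1 : Sent L t1,
    forall (M : structure t1) (F : forall f : fun_sym t2, ('I_(far f) -> carrier M) -> carrier M), graph_ok thF M F ->
      (sat M psi1 <-> sat (subst_struct thR M F) psi2).

Inductive term (V : Type) (t : vocab) : Type :=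
  | tvar : V -> term V t
  | tapp : forall f : fun_sym t, ('I_(far f) -> term V t) -> term V t.

Inductive formula (V : Type) (t : vocab) : Type :=
  | feq : term V t -> term V t -> formula V t
  | frel : forall r : rel_sym t, ('I_(rar r) -> term V t) -> formula V t
  | fneg : formula V t -> formula V t
  | fand : (V -> Prop) -> (V -> formula V t) -> formula V t
  | fex : (V -> Prop) -> formula V t -> formula V t.

Fixpoint teval V t (M : structure t) (a : V -> carrier M) (u : term V t)
  : carrier M :=
  match u with
  | tvar v => a v
  | tapp f args => funI M f (fun i => teval a (args i))
  end.

Fixpoint fsat V t (M : structure t) (a : V -> carrier M) (p : formula V t)
  : Prop :=
  match p with
  | feq u1 u2 => teval a u1 = teval a u2
  | frel r args => relI M r (fun i => teval a (args i))
  | fneg q => ~ fsat a q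
  | fand Sx qs => forall k, Sx k -> fsat a (qs k)
  | fex X q => exists b : V -> carrier M,
      (forall v, ~ X v -> b v = a v) /\ fsat b q
  end.

Fixpoint tfree V t (u : term V t) (v : V) : Prop :=
  match u with
  | tvar w => w = v
  | tapp f args => exists i, tfree (args i) v
  end.

Fixpoint ffree V t (p : formula V t) (v : V) : Prop :=
  match p with
  | feq u1 u2 => tfree u1 v \/ tfree u2 v
  | frel r args => exists i, tfree (args i) v
  | fneg q => ffree q v
  | fand Sx qs => exists k, Sx k /\ ffree (qs k) v
  | fex X q => ~ X v /\ ffree q v
  end.

Definition closed V t (p : formula V t) : Prop := forall v, ~ ffree p v.

Fixpoint bounded V t (cb qb : (V -> Prop) -> Prop) (p : formula V t) : Prop :=
  match p with
  | feq _ _ => True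
  | frel _ _ => True
  | fneg q => bounded cb qb q
  | fand Sx qs => cb Sx /\ forall k, Sx k -> bounded cb qb (qs k)
  | fex X q => qb X /\ bounded cb qb q
  end.

(* sentences of L^{-1}_kappa = U_{lambda<kappa} L_{lambda^+,aleph_0}
   (variables indexed by K, a set of size kappa; lambda = |Lam|) *)
Definition L_minus1 (K : Type) (t : vocab) (p : formula K t) : Prop :=
  closed p /\
  exists Lam : K -> Prop, lt_card (sub_of Lam) K /\
    bounded (fun S => le_card (sub_of S) (sub_of Lam))
            (fun X => exists n, le_card (sub_of X) 'I_n) p.

(* sentences of L^0_kappa = U_{lambda<kappa} L_{lambda^+,lambda^+} *)
Definition L_zero (K : Type) (t : vocab) (p : formula K t) : Prop :=
  closed p /\
  exists Lam : K -> Prop, lt_card (sub_of Lam) K /\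
    bounded (fun S => le_card (sub_of S) (sub_of Lam))
            (fun X => le_card (sub_of X) (sub_of Lam)) p.

Definition inf_sat V t (M : structure t) (p : formula V t) : Prop :=
  forall a : V -> carrier M, fsat a p.

Definition inf_le_logic (K : Type) (P : forall t, formula K t -> Prop)
  (L : Logic) : Prop :=
  forall t (p : formula K t), P t p ->
    exists q : Sent L t, forall M : structure t, inf_sat M p <-> sat M q.

Definition logic_le_inf (K : Type) (L : Logic)
  (P : forall t, formula K t -> Prop) : Prop :=
  forall t (q : Sent L t), exists p : formula K t,
    P t p /\ forall M : structure t, inf_sat M p <-> sat M q.

(* Main.v *)
Require Import Defs.
From mathcomp Require Import all_boot.
From Stdlib Require Import Classical ClassicalEpsilon FunctionalExtensionality PropExtensionality.
From Stdlib Require List. From Stdlib Require Import Lia.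
Set Implicit Arguments. Unset Strict Implicit.

Lemma le_refl A : le_card A A.
Proof. by exists id. Qed.

Lemma le_trans A B C : le_card A B -> le_card B C -> le_card A C.
Proof. move=> [f fi] [g gi]; exists (g \o f); exact: inj_comp. Qed.

Lemma le_lt A B C : le_card A B -> lt_card B C -> lt_card A C.
Proof.
move=> h [h1 h2]; split; first exact: le_trans h h1.
by move=> h3; apply: h2; apply: le_trans h3 h.
Qed.

Definition fin X := exists l : list X, forall x, List.In x l.

Fixpoint iterl X (pick : list X -> X) n : list X :=
  match n with 0 => nil | S n => pick (iterl pick n) :: iterl pick n end.

Lemma iterl_in X (pick : list X -> X) m n : (m < n)%N ->
  List.In (pick (iterl pick m)) (iterl pick n).
Proof.
elim: n => [|n IH] //= Hmn.
rewrite ltnS leq_eqVlt in Hmn; case/orP: Hmn => [/eqP->|H]; first by left.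
by right; apply: IH.
Qed.

Lemma tri X : fin X \/ le_card nat X.
Proof.
case: (classic (fin X)) => H; [by left | right].
have step : forall l : list X, exists x, ~ List.In x l.
  move=> l; apply: not_all_ex_not => Hl; apply: H; by exists l.
pose pick l := proj1_sig (constructive_indefinite_description _ (step l)).
have pickP : forall l, ~ List.In (pick l) l.
  by move=> l; rewrite /pick; case: (constructive_indefinite_description _ _).
exists (fun n => pick (iterl pick n)) => m n E.
case: (ltngtP m n) => // Hmn.
- by case: (pickP (iterl pick n)); rewrite -E; apply: iterl_in.
- by case: (pickP (iterl pick m)); rewrite E; apply: iterl_in.
Qed.

Lemma nofin_nat X : fin X -> le_card nat X -> False.
Proof.
move=> [l Hl] [f fi].
pose l' := List.map f (List.seq 0 (length l).+1).
have ND : List.NoDup l'.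
  apply: List.NoDup_map_NoDup_ForallPairs; last exact: List.seq_NoDup.
  by move=> x y _ _; apply: fi.
have := List.NoDup_incl_length ND (fun x _ => Hl x).
rewrite List.length_map List.length_seq; move=> ?; lia.
Qed.

Lemma fin_cover K I (A : I -> K -> Prop) : fin I -> (forall i, fin (sub_of (A i))) ->
  (forall k, exists i, A i k) -> fin K.
Proof.
move=> [li Hi] HA Hc.
pose lA i := proj1_sig (constructive_indefinite_description _ (HA i)).
have lAP : forall i x, List.In x (lA i).
  by move=> i; rewrite /lA; case: (constructive_indefinite_description _ _).
exists (List.flat_map (fun i => List.map (@proj1_sig _ _) (lA i)) li) => k.
case: (Hc k) => i Hik; apply/List.in_flat_map; exists i; split => //.
exact: (List.in_map (@proj1_sig _ _) _ (exist _ k Hik)).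
Qed.

Lemma fin_le_nat X : fin X -> le_card X nat.
Proof.
move=> [l Hl].
have H : forall x, exists n, List.nth_error l n = Some x.
  by move=> x; apply: List.In_nth_error.
exists (fun x => proj1_sig (constructive_indefinite_description _ (H x))) => x y.
case: (constructive_indefinite_description _ _) => n Hn.
case: (constructive_indefinite_description _ _) => m Hm /= E.
by move: Hn Hm; rewrite E => -> -[].
Qed.

Lemma nat_lt K : singular_card K -> lt_card nat K.
Proof.
move=> [Hn [I [A [HI [HA Hc]]]]]; split => // HK.
have fI : fin I.
  case: (tri I) => // HnI; case: HI => _ H; exfalso; apply: H; exact: le_trans HK HnI.
have fA : forall i, fin (sub_of (A i)).
  move=> i; case: (tri (sub_of (A i))) => // HnI.
  case: (HA i) => _ H; exfalso; apply: H; exact: le_trans HK HnI.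
exact: nofin_nat (fin_cover fI fA Hc) Hn.
Qed.

Lemma pow_mono A B : le_card A B -> le_card (A -> Prop) (B -> Prop).
Proof.
move=> [j ji]; exists (fun P b => exists a, j a = b /\ P a) => P Q E.
apply: functional_extensionality => a; apply: propositional_extensionality.
have := f_equal (fun F => F (j a)) E => /= E'.
split=> H.
- have : exists a0, j a0 = j a /\ P a0 by exists a.
  by rewrite E' => -[a0 [/ji -> ]].
- have : exists a0, j a0 = j a /\ Q a0 by exists a.
  by rewrite -E' => -[a0 [/ji -> ]].
Qed.

Lemma seq_le W : le_card (seq W) ((nat * W) -> Prop).
Proof.
exists (fun s nw => List.nth_error s nw.1 = Some nw.2) => s s' E.
apply: List.nth_error_ext => n.
have E' := fun w => f_equal (fun F => F (n, w)) E; simpl in E'.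
case Hs: (List.nth_error s n) => [w|].
  have H := E' w; rewrite Hs in H.
  have : List.nth_error s' n = Some w by rewrite -H.
  by move=> ->.
case Hs': (List.nth_error s' n) => [w|] //.
by move: (E' w); rewrite Hs Hs' => ->.
Qed.

Lemma transp T (P Q : T -> Prop) x : P = Q -> P x -> Q x.
Proof. by move=> ->. Qed.

Lemma kura W : le_card (W * W) ((W -> Prop) -> Prop).
Proof.
exists (fun ab S => S = (fun x => x = ab.1) \/ S = (fun x => x = ab.1 \/ x = ab.2)).
move=> [a b] [c d] /= E.
have Hac : a = c.
  case: (transp (x := fun x => x = a) E (or_introl erefl)) => H.
  - by have := transp (x := a) H erefl.
  - by have := transp (x := c) (esym H) (or_introl erefl).
subst c.
case: (transp (x := fun x => x = a \/ x = b) E (or_intror erefl)) => H.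
- have Hb : b = a by apply: (transp (x := b) H); right.
  subst b.
  have Hd : d = a.
    case: (transp (x := fun x => x = a \/ x = d) (esym E) (or_intror erefl)) => H'.
    + by apply: (transp (x := d) H'); right.
    + by case: (transp (x := d) H' (or_intror erefl)).
  by subst d.
- case: (transp (x := b) H (or_intror erefl)) => Hb; last by subst.
  subst b.
  by case: (transp (x := d) (esym H) (or_intror erefl)) => ->.
Qed.

Lemma small_seq K W : singular_card K -> strong_limit K -> lt_card W K ->
  ~ le_card K (seq W).
Proof.
move=> Hs HSL HW HK; case: HSL => _ Hsl.
have [Z [HZ HnZ]] : exists Z, lt_card Z K /\ le_card (nat * W) Z.
  case: (tri W) => HfW.
  - exists nat; split; first exact: nat_lt.
    have [h hi] := fin_le_nat HfW.
    exists (fun nw => pickle (nw.1, h nw.2)) => [[n w] [n' w']] /= E.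
    by have [-> /hi ->] := pcan_inj (@pickleK _) E.
  - exists ((W -> Prop) -> Prop); split; first by apply: (Hsl); apply: (Hsl).
    apply: le_trans (kura W).
    case: HfW => j ji; exists (fun nw => (j nw.1, nw.2)) => [[n w] [n' w']] /= [].
    by move=> /ji -> ->.
have := Hsl _ HZ => -[_]; apply.
apply: le_trans HK (le_trans (seq_le W) (pow_mono HnZ)).
Qed.

Fixpoint occ V t (p : formula V t) (r0 : rel_sym t) : Prop :=
  match p with
  | feq _ _ => False
  | Defs.frel r _ => r = r0
  | fneg q => occ q r0
  | fand Sx qs => exists k, Sx k /\ occ (qs k) r0
  | fex X q => occ q r0
  end.

Definition tP (K : Type) : vocab := @Vocab K (fun _ => 0) False (fun f => match f with end).

Definition MS (K : Type) (S : K -> Prop) : structure (tP K) :=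
  @Structure (tP K) unit (inhabits tt) (fun r _ => S r) (fun f => match f with end).

Lemma unit_eq (x y : unit) : x = y. Proof. by case: x; case: y. Qed.

Lemma invariance K (S S' : K -> Prop) (p : formula K (tP K)) :
  (forall r, occ p r -> (S r <-> S' r)) ->
  forall a : K -> unit, @fsat K (tP K) (MS S) a p <-> @fsat K (tP K) (MS S') a p.
Proof.
elim: p => [u1 u2|r args|q IH|Sx qs IH|X q IH] /= H a.
- by split=> _; apply: unit_eq.
- exact: H.
- by rewrite (IH H a).
- have H' : forall k, Sx k -> forall r, occ (qs k) r -> (S r <-> S' r).
    by move=> k Sk r Hr; apply: H; exists k.
  by split=> Hk k Sk; [rewrite -(IH k (H' k Sk) a) | rewrite (IH k (H' k Sk) a)]; apply: Hk.
- split=> -[b [Hb Hq]]; exists b; split => //; by apply/(IH H b).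
Qed.

Lemma choice_fun A B (R : A -> B -> Prop) :
  (forall a, exists b, R a b) -> exists f, forall a, R a (f a).
Proof.
move=> H; exists (fun a => proj1_sig (constructive_indefinite_description _ (H a))).
by move=> a; case: (constructive_indefinite_description _ _).
Qed.

Lemma decoder K (Lam : K -> Prop) qb (k0 : K) (p : formula K (tP K)) :
  bounded (fun S => le_card (sub_of S) (sub_of Lam)) qb p ->
  exists dec : seq (sub_of Lam) -> option K,
    forall r, occ p r -> exists l, dec l = Some r.
Proof.
elim: p => [u1 u2|r args|q IH|Sx qs IH|X q IH] /=.
- by move=> _; exists (fun _ => None).
- by move=> _; exists (fun _ => Some r) => r0 <-; exists nil.
- exact: IH.
- case=> [[g gi] Hb].
  have [ginv Hginv] : exists ginv : sub_of Lam -> K,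
      forall w (s : sub_of Sx), g s = w -> proj1_sig s = ginv w.
    apply: (choice_fun (R := fun w k => forall s : sub_of Sx, g s = w -> proj1_sig s = k)) => w.
    case: (classic (exists s, g s = w)) => [[s Hs]|Hn].
    + by exists (proj1_sig s) => s' Hs'; rewrite -Hs in Hs'; rewrite (gi _ _ Hs').
    + by exists k0 => s Hs; case: Hn; exists s.
  have [D HD] : exists D : K -> seq (sub_of Lam) -> option K, forall k, Sx k ->
      forall r, occ (qs k) r -> exists l, D k l = Some r.
    apply: (choice_fun (R := fun k d => Sx k -> forall r, occ (qs k) r -> exists l, d l = Some r)) => k.
    case: (classic (Sx k)) => Sk.
    + by have [d Hd] := IH k (Hb k Sk); exists d.
    + by exists (fun _ => None).
  exists (fun l => match l with nil => None | w :: l' => D (ginv w) l' end).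
  move=> r [k [Sk Hr]].
  have [l Hl] := HD k Sk r Hr.
  exists (g (exist _ k Sk) :: l).
  by rewrite -(Hginv _ (exist _ k Sk) erefl).
- by case=> _ /IH.
Qed.

Theorem mainTheorem18 (K : Type) :
  singular_card K -> strong_limit K ->
  ~ exists L : Logic,
      inf_le_logic (@L_minus1 K) L /\ logic_le_inf L (@L_zero K) /\
      full_substitution L.
Proof.
move=> Hs Hsl [L [H1 [H2 H3]]].
have Hs' := Hs.
case: Hs' => [[fN fNi] [I [A [HI [HA Hc]]]]].
pose k0 := fN 0.
have [[e ei] _] := HI.
have [einv Heinv] : exists einv : K -> I, forall k i, e i = k -> einv k = i.
  apply: (choice_fun (R := fun k j => forall i, e i = k -> j = i)) => k.
  case: (classic (exists i, e i = k)) => [[i Hi]|Hn].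
  - by exists i => i' Hi'; apply: ei; rewrite Hi Hi'.
  - have [i _] := Hc k; by exists i => i' Hi'; case: Hn; exists i'.
pose t2 := @Vocab I (fun _ => 0) False (fun f => match f with end).
pose Sim := fun k => exists i, e i = k.
pose psi2f : formula K t2 :=
  fand Sim (fun k => @Defs.frel K t2 (einv k) (fun _ => @tvar K t2 k)).
have Hm2 : L_minus1 psi2f.
  split.
  - by move=> v /= [k [_ [[i Hi] _]]].
  - exists Sim; split; last by split => //; apply: le_refl.
    apply: le_lt HI; exists (fun s => einv (proj1_sig s)).
    move=> [k [i Hi]] [k' [i' Hi']] /= E.
    have Eii : i = i' by rewrite -(Heinv _ _ Hi) -(Heinv _ _ Hi') E.
    subst k k' i'; congr exist; exact: proof_irrelevance.
have [psi2 Hpsi2] := H1 t2 psi2f Hm2.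
pose thf (i : I) : formula K (addc (tP K) 0) :=
  fand (A i) (fun k => @Defs.frel K (addc (tP K) 0) k (fun _ => @tvar K _ k)).
have [th Hth] : exists th : I -> Sent L (addc (tP K) 0),
    forall i M, inf_sat M (thf i) <-> sat M (th i).
  apply: (choice_fun (R := fun i s => forall M, inf_sat M (thf i) <-> sat M s)) => i.
  apply: H1; split.
  - by move=> v /= [k [_ [[j Hj] _]]].
  - exists (A i); split; first exact: HA.
    by split => //; apply: le_refl.
have [psi1 Hpsi1] := H3 (tP K) t2 th (fun f => match f with end) psi2.
have [p [Hp0 Hp]] := H2 (tP K) psi1.
have key : forall S, sat (MS S) psi1 <-> forall k, S k.
  move=> S.
  rewrite (Hpsi1 (MS S) (fun f => match f with end)); last by case.
  rewrite -Hpsi2.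
  split.
  - move=> H k; have [i Hi] := Hc k.
    have := H (fun _ => tt) (e i) (ex_intro (fun j => e j = e i) i erefl) => /=.
    rewrite -Hth (Heinv _ _ erefl) => H'.
    exact: (H' (fun _ => tt) k Hi).
  - move=> H a k _ /=; rewrite -Hth => a' k' _ /=; exact: H.
case: Hp0 => _ [Lam [HLam Hb]].
have [dec Hdec] := decoder k0 Hb.
case: (classic (forall k, occ p k)) => [Hall|].
- apply: (small_seq Hs Hsl HLam).
  have [f Hf] : exists f : K -> seq (sub_of Lam), forall k, dec (f k) = Some k.
    by apply: (choice_fun (R := fun k l => dec l = Some k)) => k; exact: Hdec.
  exists f => k k' E; have := Hf k; rewrite E Hf; by case.
- move=> /not_all_ex_not [k1 Hk1].
  apply: ((key (fun k => k <> k1)).1 _ k1 erefl).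
  apply: (Hp _).1 => a.
  apply/(@invariance K (fun _ => True) (fun k => k <> k1) p _ a).
  + move=> r Hr; split => // _ Er; subst; exact: Hk1.
  + exact: ((Hp _).2 ((key _).2 (fun _ => Logic.I)) a).
Qed.
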